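(* Let $0<m<1$, $\mu>0$, $f$ smooth, $u_->u_+=0$, $s=\frac{f(u_+)-f(u_-)}{u_+-u_-}$ with $f'(u_+)=s<f'(u_-)$, and $f''(u_+)=\cdots=f^{(k_+)}(u_+)=0$, $f^{(k_++1)}(u_+)\ne0$ for some integer $k_+\ge1$. Let $U$ be a monotonically decreasing viscous shock profile, i.e. $-sU'+f(U)'=\mu(U^m)''$ with $U(-\infty)=u_-$, $U(+\infty)=u_+$. Then there is a constant $C>0$ such that for all $\xi\in\mathbb{R}$, $$|U_\xi(\xi)|\le CU(\xi)^{k_++2-m},\qquad |U_{\xi\xi}(\xi)|\le CU(\xi)^{2k_++3-2m}.$$ *)

(* Defs.v *)
From Stdlib Require Import Reals.
From Coquelicot Require Import Coquelicot.
Open Scope R_scope.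

Definition smooth (f : R -> R) : Prop :=
  forall (n : nat) (x : R), ex_derive_n f n x.

Definition twice_differentiable (U : R -> R) : Prop :=
  forall x, ex_derive U x /\ ex_derive (Derive U) x.

Definition strictly_decreasing (U : R -> R) : Prop :=
  forall x y, x < y -> U y < U x.

(* Main.v *)
Require Import Defs.
From Stdlib Require Import Reals Lra Lia.
From Coquelicot Require Import Coquelicot.
Open Scope R_scope.

Lemma taylor_bound (g : R -> R) (n : nat) (y0 : R) :
  (forall k x, ex_derive_n g k x) -> 0 < y0 ->
  exists M, 0 <= M /\ forall u, 0 < u <= y0 ->
    Rabs (g u - sum_f_R0 (fun j => (u-0)^j / INR (Factorial.fact j) * Derive_n g j 0) n)
      <= M * u^(S n).
Proof.
  intros Hg Hy0.
  destruct (continuity_ab_maj (fun t => Rabs (Derive_n g (S n) t)) 0 y0)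
    as [Mx [HM HMx]]; [lra| |].
  { intros c _. apply continuity_pt_comp with (f2 := Rabs).
    - apply (proj2 (continuity_pt_filterlim (Derive_n g (S n)) c)). apply (ex_derive_continuous (Derive_n g (S n))).
      exact (Hg (S (S n)) c).
    - apply Rcontinuity_abs. }
  exists (Rabs (Derive_n g (S n) Mx) / INR (Factorial.fact (S n))). split.
  { apply Rmult_le_pos; [apply Rabs_pos|]. apply Rlt_le, Rinv_0_lt_compat, INR_fact_lt_0. }
  intros u Hu.
  destruct (Taylor_Lagrange g n 0 u) as [z [Hz Heq]]; [lra| intros; apply Hg |].
  rewrite Heq. replace (_ + _ - _) with
    ((u - 0) ^ S n / INR (Factorial.fact (S n)) * Derive_n g (S n) z) by ring.
  rewrite Rabs_mult. replace (u-0) with u by ring.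
  assert (Hf : 0 < INR (Factorial.fact (S n))) by apply INR_fact_lt_0.
  assert (Hp : 0 < u ^ S n) by (apply pow_lt; lra).
  rewrite Rabs_right; [| apply Rle_ge, Rmult_le_pos; [lra| apply Rlt_le, Rinv_0_lt_compat; lra]].
  assert (Hb : Rabs (Derive_n g (S n) z) <= Rabs (Derive_n g (S n) Mx)) by (apply HM; lra).
  unfold Rdiv.
  assert (0 < / INR (Factorial.fact (S n))) by (apply Rinv_0_lt_compat; lra).
  replace (Rabs (Derive_n g (S n) Mx) * / INR (Factorial.fact (S n)) * u ^ S n)
    with (u ^ S n * / INR (Factorial.fact (S n)) * Rabs (Derive_n g (S n) Mx)) by ring.
  apply Rmult_le_compat_l; [apply Rmult_le_pos; lra| lra].
Qed.

Lemma Dn_D (f : R -> R) j x : Derive_n (Derive f) j x = Derive_n f (S j) x.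
Proof.
  revert x; induction j; intros x; [reflexivity|].
  simpl. apply Derive_ext. intros t. rewrite IHj. reflexivity.
Qed.

Lemma smooth_D (f : R -> R) : (forall k x, ex_derive_n f k x) ->
  forall k x, ex_derive_n (Derive f) k x.
Proof.
  intros Hf k x. destruct k; [exact I|].
  simpl. apply (ex_derive_ext (Derive_n f (S k))).
  - intros t. now rewrite Dn_D.
  - exact (Hf (S (S k)) x).
Qed.

Lemma sum_f (f : R -> R) kp s u : Derive f 0 = s ->
  (forall j, (2 <= j <= kp)%nat -> Derive_n f j 0 = 0) -> (1 <= kp)%nat ->
  sum_f_R0 (fun j => (u-0)^j / INR (Factorial.fact j) * Derive_n f j 0) kp = f 0 + u * s.
Proof.
  intros H1 H2 Hk.
  assert (forall p, (S p <= kp)%nat ->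
    sum_f_R0 (fun j => (u-0)^j / INR (Factorial.fact j) * Derive_n f j 0) (S p) = f 0 + u * s).
  { induction p; intros Hp.
    - rewrite tech5. unfold sum_f_R0. change (Derive_n f 1 0) with (Derive f 0). change (Derive_n f 0 0) with (f 0). rewrite H1. simpl. field.
    - rewrite tech5, IHp by lia. rewrite H2 by lia. ring. }
  destruct kp; [lia|]. apply H. lia.
Qed.

Lemma sum_df (f : R -> R) q s u : Derive f 0 = s ->
  (forall j, (2 <= j <= S q)%nat -> Derive_n f j 0 = 0) ->
  sum_f_R0 (fun j => (u-0)^j / INR (Factorial.fact j) * Derive_n (Derive f) j 0) q = s.
Proof.
  intros H1 H2.
  assert (forall p, (p <= q)%nat ->
    sum_f_R0 (fun j => (u-0)^j / INR (Factorial.fact j) * Derive_n (Derive f) j 0) p = s).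
  { induction p; intros Hp.
    - simpl. replace (1/1 * Derive f 0) with (Derive f 0) by field. exact H1.
    - rewrite tech5, IHp by lia. rewrite Dn_D, H2 by lia. ring. }
  apply H. lia.
Qed.

Lemma U_bounds (U : R -> R) (um : R) :
  (forall x y, x < y -> U y < U x) -> is_lim U m_infty um -> is_lim U p_infty 0 ->
  forall x, 0 < U x < um.
Proof.
  intros Hd Hm Hp x.
  apply is_lim_spec in Hm. apply is_lim_spec in Hp. simpl in Hm, Hp.
  split.
  - destruct (Rlt_or_le 0 (U x)) as [h|h]; [exact h|exfalso].
    assert (h1 : U (x+1) < U x) by (apply Hd; lra).
    destruct (Hp (mkposreal (- U (x+1)) ltac:(lra))) as [M HM]. simpl in HM.
    set (y := Rmax M (x+1) + 1).
    assert (hy1 : M < y) by (unfold y; generalize (Rmax_l M (x+1)); lra).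
    assert (hy2 : x + 1 < y) by (unfold y; generalize (Rmax_r M (x+1)); lra).
    specialize (HM y hy1). specialize (Hd _ _ hy2).
    rewrite Rminus_0_r in HM. apply Rabs_def2 in HM. lra.
  - destruct (Rlt_or_le (U x) um) as [h|h]; [exact h|exfalso].
    assert (h1 : U x < U (x-1)) by (apply Hd; lra).
    destruct (Hm (mkposreal (U (x-1) - um) ltac:(lra))) as [M HM]. simpl in HM.
    set (y := Rmin M (x-1) - 1).
    assert (hy1 : y < M) by (unfold y; generalize (Rmin_l M (x-1)); lra).
    assert (hy2 : y < x - 1) by (unfold y; generalize (Rmin_r M (x-1)); lra).
    specialize (HM y hy1). specialize (Hd _ _ hy2).
    apply Rabs_def2 in HM. lra.
Qed.

Lemma const_of_deriv (W : R -> R) : (forall x, is_derive W x 0) -> forall x, W x = W 0.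
Proof.
  intros H x.
  assert (Hd : forall a b, a < b -> W b = W a).
  { intros a b hab. destruct (MVT_cor2 W (fun _ => 0) a b hab) as [c [hc _]].
    - intros c _. apply is_derive_Reals, H.
    - lra. }
  destruct (Rtotal_order x 0) as [h|[h|h]].
  - symmetry; apply Hd, h.
  - subst; reflexivity.
  - apply Hd, h.
Qed.

Theorem lemma6p1
  (m mu : R) (f : R -> R) (um up s : R) (kp : nat) (U : R -> R)
  (Hm : 0 < m < 1) (Hmu : 0 < mu) (Hf : smooth f)
  (Hup : up = 0) (Hum : um > up)
  (Hs : s = (f up - f um) / (up - um))
  (Hfp : Derive f up = s) (Hfm : s < Derive f um)
  (Hk : (1 <= kp)%nat)
  (Hdeg : forall j : nat, (2 <= j <= kp)%nat -> Derive_n f j up = 0)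
  (Hnondeg : Derive_n f (S kp) up <> 0)
  (HUdec : strictly_decreasing U)
  (HU2 : twice_differentiable U)
  (Hode : forall xi : R,
      - s * Derive U xi + Derive (fun y => f (U y)) xi
      = mu * Derive_n (fun y => Rpower (U y) m) 2 xi)
  (Hlm : is_lim U m_infty um)
  (Hlp : is_lim U p_infty up) :
  exists C : R, 0 < C /\
    forall xi : R,
      Rabs (Derive U xi) <= C * Rpower (U xi) (INR kp + 2 - m) /\
      Rabs (Derive_n U 2 xi) <= C * Rpower (U xi) (2 * INR kp + 3 - 2 * m).
Proof.
  subst up. clear Hs Hfm Hnondeg.
  destruct kp as [|q]; [lia|].
  pose proof (U_bounds U um HUdec Hlm Hlp) as HUb.
  assert (Hfd : forall x, ex_derive f x) by (intros x; exact (Hf 1%nat x)).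
  destruct (taylor_bound f (S q) um Hf ltac:(lra)) as [A [HA0 HA]].
  destruct (taylor_bound (Derive f) q um (smooth_D f Hf) ltac:(lra)) as [B [HB0 HB]].
  assert (HA' : forall u, 0 < u <= um -> Rabs (f u - f 0 - s * u) <= A * u ^ S (S q)).
  { intros u hu. specialize (HA u hu). rewrite (sum_f f (S q) s u Hfp Hdeg ltac:(lia)) in HA.
    replace (f u - f 0 - s * u) with (f u - (f 0 + u * s)) by ring. exact HA. }
  assert (HB' : forall u, 0 < u <= um -> Rabs (Derive f u - s) <= B * u ^ S q).
  { intros u hu. specialize (HB u hu). rewrite (sum_df f q s u Hfp Hdeg) in HB; exact HB. }
  clear HA HB.
  set (P := fun y => Rpower (U y) m).
  set (Q := fun x => Derive U x * (m * Rpower (U x) (m - 1))).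
  assert (HP : forall x, is_derive P x (Q x)).
  { intros x. unfold P, Q.
    apply (is_derive_comp (fun y => Rpower y m) U).
    - apply is_derive_Reals, derivable_pt_lim_power, HUb.
    - apply Derive_correct, HU2. }
  assert (HDP : forall x, Derive P x = Q x) by (intros; apply is_derive_unique, HP).
  assert (HexQ : forall x, ex_derive Q x).
  { intros x. unfold Q, Rpower. auto_derive. repeat split; try apply HU2; apply HUb. }
  set (W := fun x => (- s * U x + f (U x)) - mu * Derive P x).
  assert (HW : forall x, is_derive W x 0).
  { intros x.
    assert (e1 : ex_derive (fun y => - s * U y + f (U y)) x).
    { auto_derive. repeat split; first [apply HU2 | apply Hfd]. }
    assert (e2 : ex_derive (fun y => mu * Derive P y) x).
    { apply ex_derive_scal. apply (ex_derive_ext Q). intros; now rewrite HDP. apply HexQ. }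
    assert (ex_derive W x) by (unfold W; apply (ex_derive_minus _ _ _ e1 e2)).
    replace 0 with (Derive W x).
    { apply Derive_correct; assumption. }
    unfold W. rewrite Derive_minus; [|exact e1|exact e2]. rewrite Derive_scal.
    rewrite Derive_plus; [| auto_derive; apply HU2 | auto_derive; repeat split; first [apply HU2 | apply Hfd]].
    rewrite Derive_scal.
    pose proof (Hode x) as h.
    change (Derive_n (fun y => Rpower (U y) m) 2 x) with (Derive (Derive P) x) in h.
    lra. }
  pose proof (const_of_deriv W HW) as HWc.
  set (K := W 0) in HWc.
  assert (HQ : forall x, mu * Q x = f (U x) - s * U x - K).
  { intros x. rewrite <- HDP. specialize (HWc x). unfold W in HWc. lra. }
  assert (HPb : forall y, 0 < P y < Rpower um m).
  { intros y. unfold P. split. unfold Rpower; apply exp_pos.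
    apply Rlt_Rpower_l; [lra| apply HUb]. }
  assert (HK : K = f 0).
  { destruct (Req_dec K (f 0)) as [e|hne]; [exact e|exfalso].
    set (L := f 0 - K).
    assert (hL : 0 < Rabs L) by (apply Rabs_pos_lt; unfold L; lra).
    assert (Hc : continuity_pt f 0).
    { apply (proj2 (continuity_pt_filterlim f 0)). apply (ex_derive_continuous f). apply Hfd. }
    unfold continuity_pt, continue_in, limit1_in, limit_in in Hc. simpl in Hc.
    destruct (Hc (Rabs L / 4) ltac:(lra)) as [d [hd Hd]].
    assert (hs1 : 0 < Rabs s + 1) by (generalize (Rabs_pos s); lra).
    set (eps := Rmin d (Rabs L / (4 * (Rabs s + 1)))).
    assert (heps : 0 < eps).
    { unfold eps; apply Rmin_pos; [lra| apply Rdiv_lt_0_compat; lra]. }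
    pose proof Hlp as Hl. apply is_lim_spec in Hl. simpl in Hl.
    destruct (Hl (mkposreal eps heps)) as [M HM]. simpl in HM.
    assert (Hbig : forall y, M < y -> Rabs L / 2 < mu * Rabs (Q y)).
    { intros y hy. specialize (HM y hy). rewrite Rminus_0_r in HM.
      pose proof (HUb y) as hu. rewrite Rabs_right in HM by lra.
      assert (he1 : eps <= d) by apply Rmin_l.
      assert (he2 : eps <= Rabs L / (4 * (Rabs s + 1))) by apply Rmin_r.
      assert (h1 : Rabs (f (U y) - f 0) < Rabs L / 4).
      { apply (Hd (U y)). split.
        - unfold D_x, no_cond. split; [exact I| lra].
        - unfold R_dist. rewrite Rminus_0_r, Rabs_right by lra. lra. }
      assert (h2 : Rabs (s * U y) < Rabs L / 4).
      { rewrite Rabs_mult, (Rabs_right (U y)) by lra.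
        assert (h3 : (Rabs s + 1) * U y < (Rabs s + 1) * (Rabs L / (4 * (Rabs s + 1)))).
        { apply Rmult_lt_compat_l; lra. }
        replace ((Rabs s + 1) * (Rabs L / (4 * (Rabs s + 1)))) with (Rabs L / 4) in h3 by (field; lra).
        generalize (Rabs_pos s); nra. }
      rewrite <- (Rabs_right mu) by lra. rewrite <- Rabs_mult. rewrite HQ.
      apply Rabs_def2 in h1. apply Rabs_def2 in h2.
      unfold L in *.
      destruct (Rcase_abs (f 0 - K)) as [c1|c1];
      [rewrite (Rabs_left (f 0 - K)) in * by lra | rewrite (Rabs_right (f 0 - K)) in * by lra];
      destruct (Rcase_abs (f (U y) - s * U y - K)) as [c2|c2];
      [rewrite (Rabs_left (f (U y) - s * U y - K)) by lra | rewrite (Rabs_right (f (U y) - s * U y - K)) by lra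
      | rewrite (Rabs_left (f (U y) - s * U y - K)) by lra | rewrite (Rabs_right (f (U y) - s * U y - K)) by lra];
      lra. }
    set (a := M + 1).
    set (T := 2 * mu * Rpower um m / Rabs L).
    assert (hR : 0 < Rpower um m) by (unfold Rpower; apply exp_pos).
    assert (hT : 0 < T).
    { unfold T. apply Rdiv_lt_0_compat; [|lra]. apply Rmult_lt_0_compat; lra. }
    destruct (MVT_cor2 P Q a (a + T)) as [c [hc1 hc2]]; [lra| |].
    { intros c _. apply is_derive_Reals, HP. }
    specialize (Hbig c ltac:(unfold a in hc2; lra)).
    replace (a + T - a) with T in hc1 by ring.
    assert (h4 : Rabs L / 2 * T < mu * Rabs (Q c) * T) by (apply Rmult_lt_compat_r; lra).
    replace (Rabs L / 2 * T) with (mu * Rpower um m) in h4 by (unfold T; field; lra).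
    assert (h5 : Rpower um m < Rabs (Q c) * T).
    { apply (Rmult_lt_reg_l mu); [lra|]. lra. }
    rewrite <- (Rabs_right T) in h5 by lra. rewrite <- Rabs_mult, <- hc1 in h5.
    pose proof (HPb a). pose proof (HPb (a + T)).
    destruct (Rcase_abs (P (a + T) - P a)); [rewrite Rabs_left in h5 by lra | rewrite Rabs_right in h5 by lra]; lra. }
  rewrite HK in HQ.
  assert (Hmm : 0 < mu * m) by (apply Rmult_lt_0_compat; lra).
  set (G := fun u => (f u - f 0 - s * u) * Rpower u (1 - m) / (mu * m)).
  assert (HUG : forall x, Derive U x = G (U x)).
  { intros x. unfold G. pose proof (HQ x) as h. unfold Q in h. replace (f (U x) - f 0 - s * U x) with (mu * (Derive U x * (m * Rpower (U x) (m - 1)))) by (rewrite h; ring).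
    assert (hR : Rpower (U x) (m - 1) * Rpower (U x) (1 - m) = 1).
    { rewrite <- Rpower_plus. replace (m - 1 + (1 - m)) with 0 by ring. apply Rpower_O, HUb. }
    transitivity (Derive U x * (Rpower (U x) (m - 1) * Rpower (U x) (1 - m))).
    { rewrite hR; ring. }
    field. lra. }
  set (G' := fun u => ((Derive f u - s) * Rpower u (1 - m)
                 + (f u - f 0 - s * u) * ((1 - m) * Rpower u (1 - m) / u)) / (mu * m)).
  assert (HG : forall u, 0 < u -> is_derive G u (G' u)).
  { intros u hu. unfold G, G', Rpower. auto_derive.
    - repeat split; auto.
    - change (Derive (fun x : R => f x) u) with (Derive f u). field. split; lra. }
  assert (HRp : forall u, 0 < Rpower u (1 - m)) by (intros; unfold Rpower; apply exp_pos).
  assert (HGb : forall u, 0 < u <= um ->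
     Rabs (G u) <= A / (mu * m) * (u ^ S (S q) * Rpower u (1 - m))).
  { intros u hu. unfold G, Rdiv. rewrite !Rabs_mult, Rabs_inv,
      (Rabs_right (Rpower u (1 - m))), (Rabs_right (mu * m)) by (apply Rle_ge; apply Rlt_le; auto).
    replace (A * / (mu * m) * (u ^ S (S q) * Rpower u (1 - m)))
      with (A * u ^ S (S q) * Rpower u (1 - m) * / (mu * m)) by ring.
    assert (0 < / (mu * m)) by (apply Rinv_0_lt_compat; lra).
    apply Rmult_le_compat_r; [lra|].
    apply Rmult_le_compat_r; [apply Rlt_le, HRp|]. apply HA', hu. }
  assert (HG'b : forall u, 0 < u <= um ->
     Rabs (G' u) <= (B + A * (1 - m)) / (mu * m) * (u ^ S q * Rpower u (1 - m))).
  { intros u hu. pose proof (HRp u) as hr.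
    assert (h1 : Rabs ((Derive f u - s) * Rpower u (1 - m)) <= B * u ^ S q * Rpower u (1 - m)).
    { rewrite Rabs_mult, (Rabs_right (Rpower u (1 - m))) by lra.
      apply Rmult_le_compat_r; [lra|]. apply HB', hu. }
    assert (h2 : Rabs ((f u - f 0 - s * u) * ((1 - m) * Rpower u (1 - m) / u))
                 <= A * (1 - m) * u ^ S q * Rpower u (1 - m)).
    { rewrite Rabs_mult, (Rabs_right ((1 - m) * Rpower u (1 - m) / u)).
      2:{ apply Rle_ge, Rlt_le. apply Rdiv_lt_0_compat; [apply Rmult_lt_0_compat|]; lra. }
      replace (A * (1 - m) * u ^ S q * Rpower u (1 - m))
        with (A * u ^ S (S q) * ((1 - m) * Rpower u (1 - m) / u)) by (simpl; field; lra).
      apply Rmult_le_compat_r; [apply Rlt_le, Rdiv_lt_0_compat; [apply Rmult_lt_0_compat|]; lra|].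
      apply HA', hu. }
    unfold G', Rdiv. rewrite Rabs_mult, Rabs_inv, (Rabs_right (mu * m)) by lra.
    assert (0 < / (mu * m)) by (apply Rinv_0_lt_compat; lra).
    replace ((B + A * (1 - m)) * / (mu * m) * (u ^ S q * Rpower u (1 - m)))
      with ((B * u ^ S q * Rpower u (1 - m) + A * (1 - m) * u ^ S q * Rpower u (1 - m)) * / (mu * m)) by ring.
    apply Rmult_le_compat_r; [lra|].
    eapply Rle_trans; [apply Rabs_triang|]. unfold Rdiv in h2. lra. }
  set (C1 := A / (mu * m)). set (C2 := (B + A * (1 - m)) / (mu * m)).
  assert (hC1 : 0 <= C1) by (unfold C1; apply Rmult_le_pos; [lra| apply Rlt_le, Rinv_0_lt_compat; lra]).
  assert (hC2 : 0 <= C2).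
  { unfold C2; apply Rmult_le_pos; [nra| apply Rlt_le, Rinv_0_lt_compat; lra]. }
  exists (C1 + C1 * C2 + 1). split; [nra|].
  intros xi. pose proof (HUb xi) as hu.
  assert (hu' : 0 < U xi <= um) by lra.
  set (X1 := U xi ^ S (S q) * Rpower (U xi) (1 - m)).
  set (X2 := U xi ^ S q * Rpower (U xi) (1 - m)).
  assert (hX1 : 0 <= X1) by (unfold X1; apply Rmult_le_pos; [apply pow_le; lra| apply Rlt_le, HRp]).
  assert (hX2 : 0 <= X2) by (unfold X2; apply Rmult_le_pos; [apply pow_le; lra| apply Rlt_le, HRp]).
  assert (E1 : Rpower (U xi) (INR (S q) + 2 - m) = X1).
  { replace (INR (S q) + 2 - m) with (INR (S (S q)) + (1 - m)) by (rewrite !S_INR; ring).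
    rewrite Rpower_plus, Rpower_pow by lra. reflexivity. }
  assert (E2 : Rpower (U xi) (2 * INR (S q) + 3 - 2 * m) = X1 * X2).
  { replace (2 * INR (S q) + 3 - 2 * m) with (INR (S (S q)) + (1 - m) + (INR (S q) + (1 - m)))
      by (rewrite !S_INR; ring).
    rewrite !Rpower_plus, !Rpower_pow by lra. unfold X1, X2. ring. }
  assert (D1 : Rabs (Derive U xi) <= C1 * X1) by (rewrite HUG; apply HGb, hu').
  assert (D2 : Derive_n U 2 xi = Derive U xi * G' (U xi)).
  { change (Derive_n U 2 xi) with (Derive (Derive U) xi).
    rewrite (Derive_ext (Derive U) (fun y => G (U y))) by exact HUG.
    apply is_derive_unique. apply (is_derive_comp G U).
    - apply HG; lra.
    - apply Derive_correct, HU2. }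
  rewrite E1, E2, D2. split.
  - eapply Rle_trans; [exact D1|]. apply Rmult_le_compat_r; [lra| nra].
  - rewrite Rabs_mult.
    assert (D3 : Rabs (G' (U xi)) <= C2 * X2) by (apply HG'b, hu').
    assert (D4 : Rabs (Derive U xi) * Rabs (G' (U xi)) <= (C1 * X1) * (C2 * X2)).
    { apply Rmult_le_compat; auto using Rabs_pos. }
    eapply Rle_trans; [exact D4|].
    replace (C1 * X1 * (C2 * X2)) with ((C1 * C2) * (X1 * X2)) by ring.
    apply Rmult_le_compat_r; [apply Rmult_le_pos; auto| lra].
Qed.
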